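(* Let $C_m=\frac{1}{m+1}\binom{2m}{m}$ denote the $m$-th Catalan number. For every integer $n\ge 2$, \[\sum_{i=1}^{n-1} 2^{2i-1}C_{i-1}C_{2n-1-2i}=4^{n-1}C_{n-1}-C_{2n-2}.\] *)

(* Defs.v *)
From mathcomp Require Import all_boot all_order all_algebra.
Set Implicit Arguments. Unset Strict Implicit. Unset Printing Implicit Defensive.

(* m-th Catalan number C_m = binom(2m, m) / (m+1); the division is exact. *)
Definition catalan (m : nat) : nat := 'C(m.*2, m) %/ m.+1.

(* Main.v *)
Require Import Defs.
From mathcomp Require Import all_boot all_order all_algebra.
From mathcomp Require Import ring lra zify.
Import GRing.Theory Num.Theory.
Local Open Scope ring_scope.

Lemma catalan_mul m : (catalan m * m.+1 = 'C(m.*2, m))%N.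
Proof.
rewrite /catalan divnK //.
have h := mul_bin_left m.*2 m.
rewrite (_ : (m.*2 - m = m)%N) in h; last by lia.
apply/dvdnP; exists ('C(m.*2, m) - 'C(m.*2, m.+1))%N.
have hle : ('C(m.*2, m.+1) <= 'C(m.*2, m))%N.
  have : (m.+1 * 'C(m.*2, m.+1) <= m.+1 * 'C(m.*2, m))%N.
    by rewrite h leq_mul2r leqnSn orbT.
  by rewrite leq_mul2l.
nia.
Qed.

Lemma cat_fact m : (catalan m * m`! * m.+1`! = (m.*2)`!)%N.
Proof.
rewrite factS.
have h := bin_fact (leq_addr m m).
rewrite addnK addnn in h.
rewrite -h -catalan_mul; ring.
Qed.

Definition cq m : rat := (catalan m)%:R.

Lemma cq_rec m : cq m.+1 * (m.+2)%:R = cq m * (2 * (2 * m%:R + 1)).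
Proof.
have e1 := cat_fact m.+1. have e0 := cat_fact m.
rewrite doubleS !factS in e1.
rewrite -e0 in e1.
have nz : ((m.+1)%:R * (m`!)%:R) ^+ 2 != 0 :> rat.
  by rewrite expf_neq0 // mulf_neq0 // pnatr_eq0 -lt0n ?fact_gt0.
apply: (mulIf nz).
have e1' := congr1 (fun x : nat => x%:R : rat) e1.
rewrite /= !natrM in e1'.
rewrite /cq.
transitivity ((catalan m.+1)%:R * ((m.+1)%:R * (m`!)%:R) * ((m.+2)%:R * ((m.+1)%:R * (m`!)%:R)) : rat); first ring.
rewrite e1' -/(factorial m) !mulrSr -addnn natrD. ring.
Qed.

Definition dd k : rat := if k is k'.+1 then cq k' else - 2^-1.

Lemma cq0 : cq 0 = 1. Proof. by []. Qed.

Lemma dd_rec k : dd k.+1 * k.+1%:R = dd k * (2 * (2 * k%:R - 1)).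
Proof.
case: k => [|k] /=; first by rewrite cq0; field.
rewrite cq_rec mulrSr; ring.
Qed.

Lemma dd_S k : dd k.+1 = dd k * (2 * (2 * k%:R - 1)) / k.+1%:R.
Proof. by rewrite -dd_rec mulfK // pnatr_eq0. Qed.

Lemma cq_S m : cq m.+1 = cq m * (2 * (2 * m%:R + 1)) / m.+2%:R.
Proof. by rewrite -cq_rec mulfK // pnatr_eq0. Qed.

Definition p0 (n : rat) : rat := 2*(4*n+1)*(4*n+3)*(8*n+13).
Definition p1 (n : rat) : rat := -((n+2)*(2*n+3)*(8*n+5)).
Definition PP (n x : rat) : rat := 9+47*x+6*x^+2-32*x^+3+12*n+60*n*x+48*n*x^+2.
Definition F N j : rat := 2 * 4^+j * cq j * dd (N.*2 - j.*2)%N.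
Definition G N j : rat := PP N%:R j%:R * F N.+1 j.

Lemma wz j k : p0 (j+k)%:R * F (j+k) j + p1 (j+k)%:R * F (j+k).+1 j
  = G (j+k) j.+1 - G (j+k) j.
Proof.
rewrite /G /F.
rewrite (_ : ((j+k).*2 - j.*2 = k.*2)%N); last by lia.
rewrite (_ : ((j+k).+1.*2 - j.*2 = (k.*2).+2)%N); last by lia.
rewrite (_ : ((j+k).+1.*2 - j.+1.*2 = k.*2)%N); last by lia.
rewrite !dd_S cq_S exprS.
rewrite !mulrSr -addnn !natrD.
have hj : 0 <= j%:R :> rat by [].
have hk : 0 <= k%:R :> rat by [].
move: (j%:R) (k%:R) hj hk (cq j) (dd (k + k)) => x y hx hy c d.
rewrite /p0 /p1 /PP.
field.
by apply/and3P; split; apply: lt0r_neq0; lra.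
Qed.

Lemma Ssum N : \sum_(j < N.+1) (p0 N%:R * F N j + p1 N%:R * F N.+1 j) = G N N.+1 - G N 0.
Proof.
rewrite -(big_mkord xpredT (fun j => p0 N%:R * F N j + p1 N%:R * F N.+1 j)).
apply: telescope_sumr_eq => // k /andP [_ hk].
have [l hl] : exists l, N = (k + l)%N by exists (N - k)%N; lia.
rewrite hl; exact: wz.
Qed.

Lemma p1_neq0 (n : rat) : 0 <= n -> p1 n != 0.
Proof.
move=> hn; rewrite /p1 oppr_eq0 !mulf_neq0 //; apply: lt0r_neq0; lra.
Qed.

Lemma S_closed N : \sum_(j < N.+1) F N j = - cq (N.*2).
Proof.
elim: N => [|N IH].
  by rewrite big_ord1 /F /= cq0; field.
have h := Ssum N.
rewrite big_split /= -!mulr_sumr IH /G in h.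
rewrite big_ord_recr /=.
set T := \sum_(i < N.+1) _ in h *.
set W := F N.+1 N.+1.
have hF0 : F N.+1 0 = 2 * cq (N.*2).+1.
  by rewrite /F expr0 subn0 doubleS /= cq0; ring.
rewrite hF0 in h.
have hn : 0 <= N%:R :> rat by [].
suff key : p1 N%:R * (T + W) = p1 N%:R * (- cq N.+1.*2) by apply: (@mulfI _ (p1 N%:R)); [exact: p1_neq0 | exact: key].
have hT : p1 N%:R * T = PP N%:R N.+1%:R * W - PP N%:R 0%:R * (2 * cq (N.*2).+1) - p0 N%:R * (- cq N.*2).
  by rewrite -h; ring.
rewrite mulrDr hT doubleS !cq_S.
rewrite !mulrSr -addnn !natrD.
clear hT h IH hF0; move: (N%:R) hn (cq (N+N)) W => x hx c w.
rewrite /p0 /p1 /PP.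
field.
by apply/andP; split; apply: lt0r_neq0; lra.
Qed.

Lemma zR (k : nat) : (k%:Z)%:~R = k%:R :> rat. Proof. by []. Qed.

Lemma sumF N : \sum_(j < N) F N j = 4^+N * cq N - cq N.*2.
Proof.
have h := S_closed N.
rewrite big_ord_recr /= in h.
have hW : F N N = - (4^+N * cq N) by rewrite /F subnn /=; field.
rewrite hW in h.
by rewrite -[cq N.*2]opprK -h; ring.
Qed.

Theorem lemma3 (n : nat) (hn : (2 <= n)%N) :
  \sum_(1 <= i < n) ((2 ^ (2 * i - 1) * catalan (i - 1) * catalan (2 * n - 1 - 2 * i))%N%:Z)
  = (4 ^ (n - 1) * catalan (n - 1))%N%:Z - (catalan (2 * n - 2))%N%:Z.
Proof.
case: n hn => // N hn.
apply: (@intr_inj rat).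
rewrite rmorphB /= rmorph_sum /= !zR.
rewrite (_ : (N.+1 - 1 = N)%N); last by lia.
rewrite (_ : (2 * N.+1 - 2 = N.*2)%N); last by lia.
rewrite natrM natrX -/(cq N) -/(cq N.*2) -sumF.
rewrite big_add1 /= big_mkord; apply: eq_bigr => i _.
have hi := ltn_ord i. rewrite zR.
rewrite /F (_ : (N.*2 - i.*2 = (2 * N.+1 - 1 - 2 * i.+1).+1)%N); last by lia.
rewrite (_ : (2 * i.+1 - 1 = (2 * i).+1)%N); last by lia.
rewrite /= subn1 /= expnS expnM !natrM natrX.
rewrite /cq; ring.
Qed.
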